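(* Let $j\in\mathbb{N}$ and $r\in\mathbb{N}_0$. Then for all $n\in\mathbb{N}$, \[c_j^{(r)}(n)=\sum_{i=0}^{j}(-1)^{j-i}\binom{j}{i} d_{i+r}(n).\]
   Context: $\mathbb{N}=\{1,2,\dots\}$, $\mathbb{N}_0=\mathbb{N}\cup\{0\}$. For $j,n\in\mathbb{N}$, $d_j(n)$ is the number of ordered $j$-tuples of positive integers with product $n$; $d_0(n)=1$ if $n=1$, $d_0(n)=0$ otherwise. $c_j(n)$ is the number of ordered $j$-tuples of integers each $\ge 2$ with product $n$. The associated divisor functions are defined recursively by $c_j^{(0)}=c_j$ and $c_j^{(r)}(n)=\sum_{m\mid n}c_j^{(r-1)}(m)$ for $r,n\in\mathbb{N}$. *)

(* Defs.v *)
From mathcomp Require Import all_boot all_order all_algebra.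
Set Implicit Arguments. Unset Strict Implicit. Unset Printing Implicit Defensive.

(* A tuple is a finite function 'I_j -> 'I_(n.+1); entries are bounded by n,
   which loses nothing since a positive divisor of n >= 1 is <= n (and for
   n = 0 there is no tuple of positive integers with product 0).
   For j = 0 the empty tuple has product 1, so d_0(n) = [n == 1]. *)
Definition dfun (j n : nat) : nat :=
  #|[set f : {ffun 'I_j -> 'I_n.+1} |
      [forall k, 0 < (f k : nat)] && (\prod_(k < j) (f k : nat) == n)]|.

Definition cfun (j n : nat) : nat :=
  #|[set f : {ffun 'I_j -> 'I_n.+1} |
      [forall k, 1 < (f k : nat)] && (\prod_(k < j) (f k : nat) == n)]|.

Fixpoint cassoc (j r n : nat) : nat :=
  match r with
  | 0 => cfun j n
  | r'.+1 => \sum_(m <- divisors n) cassoc j r' m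
  end.

(* Main.v *)
Require Import Defs.
From mathcomp Require Import all_boot all_order all_algebra.
From mathcomp Require Import ring.
Set Implicit Arguments. Unset Strict Implicit. Unset Printing Implicit Defensive.

Section Count.
Variable T : finType.

Definition fcons j (x : T) (g : {ffun 'I_j -> T}) : {ffun 'I_j.+1 -> T} :=
  [ffun k : 'I_j.+1 => match unlift ord0 k with Some k' => g k' | None => x end].
Definition ftail j (f : {ffun 'I_j.+1 -> T}) : {ffun 'I_j -> T} :=
  [ffun k => f (lift ord0 k)].

Lemma fcons0 j x g : @fcons j x g ord0 = x.
Proof. by rewrite ffunE unlift_none. Qed.
Lemma fconsS j x g k : @fcons j x g (lift ord0 k) = g k.
Proof. by rewrite ffunE liftK. Qed.

Lemma sum_ffunS j (F : {ffun 'I_j.+1 -> T} -> nat) :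
  \sum_f F f = \sum_(x : T) \sum_(g : {ffun 'I_j -> T}) F (fcons x g).
Proof.
rewrite pair_big /=.
rewrite (reindex (fun p : T * {ffun 'I_j -> T} => fcons p.1 p.2)) //.
exists (fun f : {ffun 'I_j.+1 -> T} => (f ord0, ftail f)) => [[x g] _|f _] /=.
  by rewrite fcons0; congr pair; apply/ffunP => k; rewrite ffunE fconsS.
apply/ffunP => k; rewrite ffunE; case: unliftP => [k'|] -> //.
by rewrite ffunE.
Qed.
End Count.

Definition G (P : pred nat) j n B :=
  #|[set f : {ffun 'I_j -> 'I_B.+1} |
      [forall k, P (f k)] && (\prod_(k < j) (f k : nat) == n)]|.

Fixpoint H (P : pred nat) j n : nat :=
  match j with
  | 0 => (n == 1 : nat)
  | j'.+1 => \sum_(x <- divisors n | P x) H P j' (n %/ x)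
  end.

Lemma cardE' (T : finType) (p : pred T) : #|[set x | p x]| = \sum_x (p x : nat).
Proof. by rewrite -sum1_card big_mkcond /=; apply: eq_bigr => x _; rewrite inE; case: (p x). Qed.

Lemma sum_ord_divisors B n (F : nat -> nat) : 0 < n -> n <= B ->
  \sum_(x < B.+1 | x %| n) F x = \sum_(x <- divisors n) F x.
Proof.
move=> n0 nB.
rewrite -(big_mkord (fun x => x %| n) F) /index_iota subn0.
rewrite -big_filter; apply: perm_big; apply: uniq_perm.
- by rewrite filter_uniq // iota_uniq.
- exact: divisors_uniq.
move=> d; rewrite mem_filter mem_iota -dvdn_divisors //= add0n.
case dn: (d %| n) => //=; rewrite ltnS; apply: leq_trans nB.
by apply: dvdn_leq.
Qed.

Lemma fcons_forall (T : finType) (P : pred T) j x (g : {ffun 'I_j -> T}) :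
  [forall k, P (fcons x g k)] = P x && [forall k, P (g k)].
Proof.
apply/forallP/andP => [H|[Px /forallP H] k].
  split; first by have := H ord0; rewrite fcons0.
  by apply/forallP => k; have := H (lift ord0 k); rewrite fconsS.
by case: (unliftP ord0 k) => [k'|] ->; rewrite ?fcons0 ?fconsS.
Qed.

Lemma fcons_prod B j (x : 'I_B.+1) (g : {ffun 'I_j -> 'I_B.+1}) :
  \prod_(k < j.+1) (fcons x g k : nat) = x * \prod_(k < j) (g k : nat).
Proof.
rewrite big_ord_recl fcons0; congr (_ * _); apply: eq_bigr => k _.
by rewrite fconsS.
Qed.

Lemma mul_eq x p n : 0 < x -> (x * p == n) = (x %| n) && (p == n %/ x).
Proof.
move=> x0; apply/eqP/andP => [<-|[/dvdnP [q ->] /eqP ->]].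
  by rewrite dvdn_mulr // mulKn.
by rewrite mulnK // mulnC.
Qed.

Lemma G_H (P : pred nat) (P0 : forall x, P x -> 0 < x) j : forall n B, 0 < n -> n <= B -> G P j n B = H P j n.
Proof.
elim: j => [|j IH] n B n0 nB.
  rewrite /G cardE' (eq_bigr (fun _ => (n == 1 : nat))).
    by rewrite sum_nat_const card_ffun !card_ord expn0 mul1n.
  move=> f _; rewrite big_ord0 eq_sym.
  by have -> : [forall k, P (f k)] by apply/forallP => -[].
rewrite /G cardE' sum_ffunS /=.
transitivity (\sum_(x < B.+1) if P x && (x %| n) then G P j (n %/ x) B else 0).
  apply: eq_bigr => x _.
  under eq_bigr => g _ do rewrite (@fcons_forall _ (fun y : 'I_B.+1 => P y)) fcons_prod.
  case Px: (P x) => /=; last by rewrite big1.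
  have x0 := P0 _ Px.
  case: (boolP (x %| n)) => dx.
    rewrite /G cardE'; apply: eq_bigr => g _.
    by rewrite mul_eq // dx.
  by rewrite big1 // => g _; rewrite mul_eq // (negbTE dx) andbF.
rewrite -big_mkcond /= big_mkcondl /= (sum_ord_divisors (fun x => if P x then G P j (n %/ x) B else 0)) // [RHS]big_mkcond /= !big_seq.
apply: eq_bigr => x xd; case Px: (P x) => //.
have dx : x %| n by rewrite dvdn_divisors.
have x0 := P0 _ Px.
apply: IH.
  by rewrite divn_gt0 // dvdn_leq.
by apply: leq_trans nB; apply: leq_div.
Qed.

Lemma div_pos n x : 0 < n -> x \in divisors n -> 0 < x.
Proof.
move=> n0 xd; have: x %| n by rewrite dvdn_divisors.
by case: x xd => // _; rewrite dvd0n => /eqP nz; rewrite nz in n0.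
Qed.

Lemma sum_div_inv n (F : nat -> nat) : 0 < n ->
  \sum_(x <- divisors n) F (n %/ x) = \sum_(x <- divisors n) F x.
Proof.
move=> n0; rewrite -(big_map (fun x => n %/ x) xpredT F).
have key x : x \in divisors n -> n %/ (n %/ x) = x /\ (n %/ x) \in divisors n.
  move=> xd; have x0 := div_pos n0 xd.
  have: x %| n by rewrite dvdn_divisors.
  case/dvdnP => q nq; have q0 : 0 < q by move: n0; rewrite nq muln_gt0 => /andP[].
  rewrite nq mulnK // mulKn //; split => //.
  by rewrite -dvdn_divisors ?muln_gt0 ?q0 ?x0 // dvdn_mulr.
apply: perm_big; apply: uniq_perm.
- rewrite map_inj_in_uniq ?divisors_uniq // => x y xd yd e.
  by rewrite -(proj1 (key _ xd)) e (proj1 (key _ yd)).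
- exact: divisors_uniq.
move=> d; apply/mapP/idP => [[x xd ->]|dd]; first by case: (key _ xd).
by exists (n %/ d); [case: (key _ dd) | case: (key _ dd)].
Qed.

Definition P0 : pred nat := fun x => 0 < x.
Definition P1 : pred nat := fun x => 1 < x.

Lemma dfun_H j n : 0 < n -> dfun j n = H P0 j n.
Proof. by move=> n0; rewrite -(@G_H P0 _ j n n n0 (leqnn n)). Qed.

Lemma cfun_H j n : 0 < n -> cfun j n = H P1 j n.
Proof. by move=> n0; rewrite -(@G_H P1 (fun x (h : 1 < x) => ltnW h) j n n n0 (leqnn n)). Qed.

Lemma dfunS k n : 0 < n -> dfun k.+1 n = \sum_(m <- divisors n) dfun k m.
Proof.
move=> n0; rewrite dfun_H //= big_seq_cond.
rewrite (eq_bigl (fun x => x \in divisors n)); last first.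
  by move=> x; case xd: (x \in divisors n) => //=; rewrite /P0 (div_pos n0 xd).
rewrite -big_seq (sum_div_inv (H P0 k)) // big_seq [RHS]big_seq.
by apply: eq_bigr => x xd; rewrite dfun_H // (div_pos n0 xd).
Qed.

Lemma cfunS j n : 0 < n -> cfun j.+1 n + cfun j n = \sum_(m <- divisors n) cfun j m.
Proof.
move=> n0; transitivity (\sum_(m <- divisors n) H P1 j m); last first.
  by rewrite !big_seq; apply: eq_bigr => m md; rewrite cfun_H // (div_pos n0 md).
rewrite !cfun_H //= -(sum_div_inv (H P1 j)) //.
rewrite [RHS](bigID P1) /=; congr (_ + _).
rewrite (big_rem 1) ?divisor1 //= divn1 big1_seq ?addn0 // => y /andP[ny yr].
have yd : y \in divisors n by apply: mem_rem yr.
have y0 := div_pos n0 yd.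
move: ny; rewrite /P1; case: y y0 yr {yd} => // -[|y] //= _ yr.
by rewrite mem_rem_uniq ?divisors_uniq // inE eqxx andbF in yr.
Qed.

Lemma cassoc_rec j r n : 0 < n -> cassoc j.+1 r n + cassoc j r n = cassoc j r.+1 n.
Proof.
elim: r n => [|r IH] n n0; first exact: cfunS.
rewrite /= -big_split /= big_seq [RHS]big_seq.
by apply: eq_bigr => m md; rewrite IH // (div_pos n0 md).
Qed.

Lemma cassoc0 r n : 0 < n -> cassoc 0 r n = dfun r n.
Proof.
elim: r n => [|r IH] n n0.
  by rewrite /= cfun_H // dfun_H.
rewrite /= dfunS // big_seq [RHS]big_seq.
by apply: eq_bigr => m md; rewrite IH // (div_pos n0 md).
Qed.

Import GRing.Theory.
Local Open Scope ring_scope.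

Definition Fs (j r n : nat) : int :=
  \sum_(i < j.+1) (-1) ^+ (j - i) * ('C(j, i))%:Z * (dfun (i + r) n)%:Z.

Lemma Fs_rec j r n : Fs j.+1 r n = Fs j r.+1 n - Fs j r n.
Proof.
have A : \sum_(i < j.+1) (-1) ^+ (j - i) * ('C(j, i))%:Z * (dfun (i.+1 + r) n)%:Z
   = Fs j r.+1 n by apply: eq_bigr => i _; rewrite addSnnS.
have B : \sum_(i < j.+1) (-1) ^+ (j - i) * ('C(j, i.+1))%:Z * (dfun (i.+1 + r) n)%:Z
   = - \sum_(i < j) (-1) ^+ (j - i.+1) * ('C(j, i.+1))%:Z * (dfun (i.+1 + r) n)%:Z.
  rewrite big_ord_recr /= bin_small // mulr0 mul0r addr0 -sumrN.
  apply: eq_bigr => i _.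
  by rewrite -(subnSK (ltn_ord i)) exprS mulN1r !mulNr.
have C : Fs j r n = (-1) ^+ j * (dfun r n)%:Z +
    \sum_(i < j) (-1) ^+ (j - i.+1) * ('C(j, i.+1))%:Z * (dfun (i.+1 + r) n)%:Z.
  by rewrite /Fs big_ord_recl /= subn0 bin0 mulr1.
rewrite C -A /Fs big_ord_recl /=.
under eq_bigr => i _ do rewrite /bump /= add1n subSS binS PoszD mulrDr mulrDl.
rewrite big_split /= B subn0 bin0 add0n mulr1 exprS mulN1r.
set a := (_ * _)%R; set b := (\sum_(i < j) _)%R; set c := (\sum_(i < j.+1) _)%R.
rewrite /a; ring.
Qed.

Unset Implicit Arguments.
Theorem lemma11 (j r n : nat) (hj : (0 < j)%N) (hn : (0 < n)%N) :
  (cassoc j r n)%:Z =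
  \sum_(i < j.+1) (-1) ^+ (j - i) * ('C(j, i))%:Z * (dfun (i + r) n)%:Z.
Proof.
rewrite -/(Fs j r n); elim: j r {hj} => [|j IH] r.
  by rewrite /Fs big_ord1 /= cassoc0 // expr0 mul1r bin0 add0n mul1r.
have := cassoc_rec j r hn; move/(congr1 (fun x : nat => x%:Z)).
rewrite PoszD Fs_rec -!IH => e; by rewrite -e addrK.
Qed.
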